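(* Let $q=p^m$ with $p$ prime, let $3\le k\le n\le q$, let $\alpha=(\alpha_1,\dots,\alpha_n)\in\mathbb{F}_q^n$ have pairwise distinct entries, let $v=(v_1,\dots,v_n)\in(\mathbb{F}_q^* )^n$, $\eta\in\mathbb{F}_q^*$ and $\delta\in\mathbb{F}_q$. Let $\mathcal{C}$ and $\mathcal{C}_1$ be the codes defined in the context. Define $\mathbf{t}=(t_1,\dots,t_{n+2})\in\mathbb{F}_q^{n+2}$ by $t_i=v_i^{-1}u_i\alpha_i^{\,n+2-k}$ for $1\le i\le n$, where $u_i=\prod_{j\ne i}(\alpha_i-\alpha_j)^{-1}$; $t_{n+1}=\delta-S_2-\eta S_5$; and $t_{n+2}=S_1$, where, with all $\sigma_r=\sigma_r([n])$, $S_1=\sigma_1$, $S_2=\sigma_1^2-\sigma_2$, and $S_5=-(\sigma_3\sigma_1^2+\sigma_5-\sigma_3\sigma_2-\sigma_4\sigma_1)+\sigma_2(\sigma_1^3+\sigma_3-2\sigma_2\sigma_1)+\sigma_1(\sigma_2\sigma_1^2+\sigma_4-\sigma_2^2-\sigma_3\sigma_1)-\sigma_1^2(\sigma_1^3+\sigma_3-2\sigma_2\sigma_1)$. Then $\mathcal{C}=\overline{\mathcal{C}_1}(\mathbf{t})$, i.e. $\mathcal{C}=\{(c_1,\dots,c_{n+2},\sum_{i=1}^{n+2}t_ic_i):(c_1,\dots,c_{n+2})\in\mathcal{C}_1\}$.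
   Context: For a finite set $I\subseteq[n]=\{1,\dots,n\}$ and $r\ge1$, $\sigma_r(I)=(-1)^r\sum_{i_1<\dots<i_r\in I}\alpha_{i_1}\cdots\alpha_{i_r}$ (with $\sigma_r(I)=0$ if $r>|I|$). Let $\mathcal{S}=\{f(x)=\sum_{i=0}^{k-1}f_ix^i+\eta f_{k-1}x^{k+2}: f_i\in\mathbb{F}_q\}$. The code $\mathcal{C}\subseteq\mathbb{F}_q^{n+3}$ is $\mathcal{C}=\{(v_1f(\alpha_1),\dots,v_nf(\alpha_n),f_{k-1},f_{k-2},f_{k-3}+\delta f_{k-1}): f\in\mathcal{S}\}$, where $f_j$ is the coefficient of $x^j$ in $f$ for $j\le k-1$. The code $\mathcal{C}_1\subseteq\mathbb{F}_q^{n+2}$ is obtained from $\mathcal{C}$ by deleting the last coordinate, i.e. $\mathcal{C}_1=\{(v_1f(\alpha_1),\dots,v_nf(\alpha_n),f_{k-1},f_{k-2}):f\in\mathcal{S}\}$. *)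

(* Defs.v *)
From HB Require Import structures.
From mathcomp Require Import all_boot all_order all_algebra all_field.
Set Implicit Arguments. Unset Strict Implicit. Unset Printing Implicit Defensive.
Import Order.TTheory GRing.Theory.
Local Open Scope ring_scope.

Section Codes.
Variables (F : fieldType) (n k : nat) (alpha v : 'I_n -> F) (eta delta : F).

Definition sigma (r : nat) (I : {set 'I_n}) : F :=
  (-1) ^+ r * \sum_(J : {set 'I_n} | (J \subset I) && (#|J| == r)) \prod_(i in J) alpha i.

Definition fS (f : {poly F}) : {poly F} :=
  f + (eta * f`_(k.-1))%:P * 'X^(k + 2).

Definition evalpart (f : {poly F}) : 'rV[F]_n := \row_(i < n) (v i * (fS f).[alpha i]).

Definition encC (f : {poly F}) : 'rV[F]_(n + 2 + 1) :=
  row_mx (row_mx (evalpart f) (\row_(j < 2) nth 0 [:: f`_(k.-1); f`_(k-2)] j))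
         (\row_(j < 1) (f`_(k-3) + delta * f`_(k.-1))).

Definition encC1 (f : {poly F}) : 'rV[F]_(n + 2) :=
  row_mx (evalpart f) (\row_(j < 2) nth 0 [:: f`_(k.-1); f`_(k-2)] j).

Definition inC (c : 'rV[F]_(n + 2 + 1)) : Prop :=
  exists f : {poly F}, (size f <= k)%N /\ c = encC f.

Definition inC1 (c : 'rV[F]_(n + 2)) : Prop :=
  exists f : {poly F}, (size f <= k)%N /\ c = encC1 f.

Definition extend (t c : 'rV[F]_(n + 2)) : 'rV[F]_(n + 2 + 1) :=
  row_mx c (\row_(j < 1) \sum_(i < n + 2) t 0 i * c 0 i).

Definition u (i : 'I_n) : F := \prod_(j < n | j != i) (alpha i - alpha j)^-1.

Definition sg (r : nat) : F := sigma r setT.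
Definition S1 : F := sg 1.
Definition S2 : F := sg 1 ^+ 2 - sg 2.
Definition S5 : F :=
  - (sg 3 * sg 1 ^+ 2 + sg 5 - sg 3 * sg 2 - sg 4 * sg 1)
  + sg 2 * (sg 1 ^+ 3 + sg 3 - 2%:R * sg 2 * sg 1)
  + sg 1 * (sg 2 * sg 1 ^+ 2 + sg 4 - sg 2 ^+ 2 - sg 3 * sg 1)
  - sg 1 ^+ 2 * (sg 1 ^+ 3 + sg 3 - 2%:R * sg 2 * sg 1).

Definition tvec : 'rV[F]_(n + 2) :=
  row_mx (\row_(i < n) ((v i)^-1 * u i * alpha i ^+ (n + 2 - k)))
         (\row_(j < 2) nth 0 [:: delta - S2 - eta * S5; S1] j).

End Codes.

(* Main.v *)
Require Import Defs.
From HB Require Import structures.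
From mathcomp Require Import all_boot all_order all_algebra all_field.
From mathcomp Require Import zify ring.
Import GRing.Theory.
Local Open Scope ring_scope.
Set Implicit Arguments. Unset Strict Implicit.

Section Aux.
Variables (F : fieldType) (n : nat) (alpha : 'I_n -> F).
Hypothesis halpha : injective alpha.
Hypothesis n_gt0 : (0 < n)%N.

Definition Lp (i : 'I_n) : {poly F} := \prod_(j < n | j != i) ('X - (alpha j)%:P).

Lemma Lp_at (i m : 'I_n) : (Lp i).[alpha m] = if i == m then (u alpha i)^-1 else 0.
Proof.
rewrite /Lp horner_prod; case: eqP => [<-|/eqP neq].
  rewrite /u prodfV invrK; apply: eq_bigr => j _; by rewrite hornerXsubC.
rewrite (bigD1 m) 1?eq_sym //= hornerXsubC subrr mul0r //.
Qed.

Lemma size_Lp i : size (Lp i) = n.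
Proof.
rewrite /Lp size_prod /=; last by move=> j _; rewrite polyXsubC_eq0.
rewrite (eq_bigr (fun=> (2 * 1)%N)); last by move=> j _; rewrite size_XsubC.
rewrite -big_distrr /= sum1_card cardC1 card_ord /=.
by case: (n) {i} n_gt0 => // ?; rewrite mul2n -addnn -addSn addnK.
Qed.

Lemma Lp_coef i : (Lp i)`_(n.-1) = 1.
Proof.
have := monic_prod_XsubC (index_enum 'I_n) (fun j => j != i) alpha.
by rewrite -/(Lp i) monicE lead_coefE size_Lp => /eqP.
Qed.

Definition P (j : nat) : F := \sum_(i < n) u alpha i * alpha i ^+ j.

Lemma P_low (j : nat) : (j < n)%N -> P j = (j == n.-1)%:R.
Proof.
move=> hj.
pose Q := \sum_(i < n) (alpha i ^+ j * u alpha i) *: Lp i.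
have uN i : u alpha i != 0.
  rewrite /u prodfV invr_eq0; apply/prodf_neq0 => l hl.
  by rewrite subr_eq0 (inj_eq halpha) eq_sym.
have HQ : Q = 'X^j.
  apply/eqP; rewrite -subr_eq0; apply/eqP.
  apply/eqP/negPn/negP => hne.
  have := max_poly_roots hne (rs := [seq alpha i | i <- enum 'I_n]).
  rewrite map_inj_uniq // enum_uniq size_map size_enum_ord.
  have -> : all (root (Q - 'X^j)) [seq alpha i | i <- enum 'I_n].
    apply/allP => x /mapP [m _ ->]; rewrite /root hornerD hornerN hornerXn.
    rewrite /Q horner_sum (bigD1 m) //= big1 ?addr0.
      by rewrite hornerZ Lp_at eqxx mulrK ?unitfE // subrr.
    by move=> i /negPf hi; rewrite hornerZ Lp_at hi mulr0.
  move=> /(_ isT isT); apply/negP; rewrite -leqNgt.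
  apply: (leq_trans (size_add _ _)); rewrite geq_max size_polyN size_polyXn hj andbT.
  apply: (leq_trans (size_sum _ _ _)); apply/bigmax_leqP => i _.
  by rewrite (leq_trans (size_scale_leq _ _)) // size_Lp.
have := congr1 (fun p : {poly F} => p`_(n.-1)) HQ.
rewrite /= coefXn /Q coef_sum eq_sym => <-; rewrite /P; apply: eq_bigr => i _.
by rewrite coefZ Lp_coef mulr1 mulrC.
Qed.


Lemma L2 i0 : \sum_(r < n.+1) sg alpha r * alpha i0 ^+ (n - r) = 0.
Proof.
have H0 : \prod_(l < n) (alpha i0 - alpha l) = 0 by rewrite (bigD1 i0) //= subrr mul0r.
rewrite -[RHS]H0.
have -> : \prod_(l < n) (alpha i0 - alpha l) = \prod_(l < n) (- alpha l + alpha i0).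
  by apply: eq_bigr => l _; rewrite addrC.
rewrite bigA_distr.
rewrite (partition_big (fun J : {set 'I_n} => inord #|J| : 'I_n.+1) xpredT) //=.
apply: eq_bigr => r _.
rewrite /sg /sigma -mulrA mulr_suml mulr_sumr.
apply: eq_big => [J|J /andP[_ hJ]].
  rewrite subsetT /= -val_eqE /= inordK // ltnS.
  by have := max_card (mem J); rewrite card_ord.
have {}hJ : #|J| = r.
  by apply/eqP.
rewrite [RHS](bigID (fun l => l \in J)) /=.
rewrite [X in _ = X * _](eq_bigr (fun l => - alpha l)); last by move=> l ->.
rewrite [X in _ = _ * X](eq_bigr (fun l => alpha i0)); last by move=> l /negPf ->.
rewrite prodrN [X in _ = _ * X](eq_bigl (fun l => l \in ~: J)); last by move=> l; rewrite in_setC.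
rewrite prodr_const hJ mulrA.
have hc : #|~: J| = (n - r)%N.
  by have := cardsC J; rewrite card_ord hJ; lia.
by rewrite hc.
Qed.

Lemma sg0 : sg alpha 0 = 1.
Proof.
rewrite /sg /sigma expr0 mul1r (big_pred1 set0) ?big_set0 // => J.
by rewrite subsetT /= cards_eq0.
Qed.

Lemma sg_big r : (n < r)%N -> sg alpha r = 0.
Proof.
move=> hr; rewrite /sg /sigma big_pred0 ?mulr0 // => J.
rewrite subsetT /=; apply/negP => /eqP hJ.
by have := max_card (mem J); rewrite card_ord -/#|J| hJ leqNgt hr.
Qed.


Lemma Erec t : \sum_(r < t.+2) sg alpha r * P (n + t - r) = 0.
Proof.
have H : \sum_(i < n) u alpha i * alpha i ^+ t *
   (\sum_(r < n.+1) sg alpha r * alpha i ^+ (n - r)) = 0.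
  by rewrite big1 // => i _; rewrite L2 mulr0.
have H2 : \sum_(r < n.+1) sg alpha r * P (n + t - r) = 0.
  rewrite -[RHS]H.
  under [RHS]eq_bigr do rewrite mulr_sumr.
  rewrite [RHS]exchange_big /=; apply: eq_bigr => r _.
  rewrite /P mulr_sumr; apply: eq_bigr => i _.
  have hr := ltn_ord r.
  have -> : (n + t - r = t + (n - r))%N by lia.
  by rewrite exprD; ring.
pose G := fun r : nat => sg alpha r * P (n + t - r).
rewrite -[RHS]H2.
change (\sum_(r < t.+2) G r = \sum_(r < n.+1) G r).
rewrite (big_ord_widen (n + t + 2) G) ?[in RHS](big_ord_widen (n + t + 2) G); try lia.
rewrite big_mkcond [RHS]big_mkcond; apply: eq_bigr => r _.
have hn1 : (n.-1 = n - 1)%N by lia.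
case: (ltnP r t.+2) => h1; case: (ltnP r n.+1) => h2 //.
  by rewrite /G sg_big ?mul0r //; lia.
rewrite /G P_low; last lia.
have -> : ((n + t - r)%N == n.-1) = false by apply/negP => /eqP; lia.
by rewrite mulr0.
Qed.


Lemma Erec' t : \sum_(r < t.+2) sg alpha r * P (n.-1 + (t.+1 - r)) = 0.
Proof.
rewrite -[RHS](Erec t); apply: eq_bigr => r _.
have := ltn_ord r; move=> hr.
by have -> : (n.-1 + (t.+1 - r) = n + t - r)%N by lia.
Qed.

Lemma Pvals : P n.-1 = 1 /\ P n = - sg alpha 1 /\ P n.+1 = S2 alpha /\ P (n + 4) = S5 alpha.
Proof.
pose p s := P (n.-1 + s).
have h0 : p 0 = 1 by rewrite /p addn0 P_low ?eqxx //; lia.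
have e t := Erec' t.
have e0 := e 0; have e1 := e 1; have e2 := e 2; have e3 := e 3; have e4 := e 4.
move: e0 e1 e2 e3 e4; rewrite !big_ord_recr !big_ord0 /= ?subSS ?subn0 sg0 -!/(p _) h0.
have -> : P n.-1 = p 0 by rewrite /p addn0.
have -> : P n = p 1 by rewrite /p; congr P; lia.
have -> : P n.+1 = p 2 by rewrite /p; congr P; lia.
have -> : P (n + 4) = p 5 by rewrite /p; congr P; lia.
rewrite h0 /S2 /S5.
move: (p 1) (p 2) (p 3) (p 4) (p 5) (sg alpha 1) (sg alpha 2) (sg alpha 3) (sg alpha 4) (sg alpha 5).
move=> p1 p2 p3 p4 p5 s1 s2 s3 s4 s5 e0 e1 e2 e3 e4.
have h1 : p1 = - s1 by apply: subr0_eq; rewrite -[RHS]e0; ring.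
rewrite h1 in e1 e2 e3 e4.
have h2 : p2 = s1 ^+ 2 - s2 by apply: subr0_eq; rewrite -[RHS]e1; ring.
rewrite h2 in e2 e3 e4.
have h3 : p3 = - (s1 * p2 + s2 * p1 + s3) by apply: subr0_eq; rewrite -[RHS]e2 h1 h2; ring.
rewrite h1 h2 in h3.
rewrite h3 in e3 e4.
have h4 : p4 = - (s1 * p3 + s2 * p2 + s3 * p1 + s4) by apply: subr0_eq; rewrite -[RHS]e3 h1 h2 h3; ring.
rewrite h1 h2 h3 in h4; rewrite h4 in e4.
have h5 : p5 = - (s1 * p4 + s2 * p3 + s3 * p2 + s4 * p1 + s5) by apply: subr0_eq; rewrite -[RHS]e4 h1 h2 h3 h4; ring.
rewrite h5 h4 h3 h2 h1; split => //; split => //; split => //; ring.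
Qed.

End Aux.

Section Main.
Variables (F : fieldType) (n k' : nat) (alpha v : 'I_n -> F) (eta delta : F).
Hypothesis halpha : injective alpha.
Hypothesis hv : forall i, v i != 0.
Hypothesis hkn : (k'.+3 <= n)%N.

Lemma Kkey (f : {poly F}) : (size f <= k'.+3)%N ->
  \sum_(i < n + 2) tvec k'.+3 alpha v eta delta 0 i * encC1 k'.+3 alpha v eta f 0 i
  = f`_(k'.+3 - 3) + delta * f`_(k'.+3.-1).
Proof.
move=> hf.
have n_gt0 : (0 < n)%N by lia.
have [hP0 [hP1 [hP2 hP5]]] := Pvals halpha n_gt0.
rewrite big_split_ord /= !big_ord_recr !big_ord0 /=.
rewrite /tvec /encC1 !row_mxEr !mxE /=.
have -> : (k'.+3 - 2 = k'.+1)%N by lia.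
have -> : (k'.+3 - 3 = k')%N by lia.
set a := (n + 2 - k'.+3)%N.
rewrite (eq_bigr (fun i => u alpha i * alpha i ^+ a * (\sum_(j < k'.+3) f`_j * alpha i ^+ j)
     + eta * f`_(k'.+2) * (u alpha i * alpha i ^+ (n + 4)))); last first.
  move=> i _; rewrite !row_mxEl !mxE /fS hornerE.
  rewrite (horner_coef_wide _ hf) /=.
  have -> : (n + 4 = a + (k'.+3 + 2))%N by rewrite /a; lia.
  rewrite hornerCM hornerXn [alpha i ^+ (a + _)]exprD.
  move: (hv i) (\sum_(j < k'.+3) f`_j * alpha i ^+ j) => hvi S.
  move: (v i) hvi (u alpha i) (alpha i ^+ a) (alpha i ^+ (k'.+3 + 2)) (f`_k'.+2) => vi hvi ui aa bb fk.
  by field.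
rewrite big_split /= -mulr_sumr -/(P alpha (n + 4)) hP5.
under eq_bigr do rewrite mulr_sumr.
rewrite exchange_big /=.
rewrite (eq_bigr (fun j : 'I_k'.+3 => f`_j * P alpha (a + j))); last first.
  move=> j _; rewrite /P mulr_sumr; apply: eq_bigr => i _; rewrite exprD.
  move: (u alpha i) (alpha i ^+ a) (alpha i ^+ j) (f`_j) => x y z w; ring.
rewrite !big_ord_recr /= big1 => [|j _]; last first.
  rewrite P_low //; last by have := ltn_ord j; rewrite /a; lia.
  have -> : ((a + j)%N == n.-1) = false.
    by apply/negP => /eqP; have := ltn_ord j; rewrite /a; lia.
  by rewrite mulr0.
have -> : (a + k' = n.-1)%N by rewrite /a; lia.
have -> : (a + k'.+1 = n)%N by rewrite /a; lia.
have -> : (a + k'.+2 = n.+1)%N by rewrite /a; lia.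
rewrite hP0 hP1 hP2 /S1.
move: (f`_k') (f`_k'.+1) (f`_k'.+2) (S2 alpha) (S5 alpha) (sg alpha 1) => x y z s2 s5 s1.
ring.
Qed.

End Main.

Unset Implicit Arguments.

Theorem theorem1 (F : finFieldType) (p m : nat) (hp : prime p)
  (hq : #|F| = (p ^ m)%N) (n k : nat) (hk3 : (3 <= k)%N) (hkn : (k <= n)%N)
  (hnq : (n <= #|F|)%N) (alpha v : 'I_n -> F) (halpha : injective alpha)
  (hv : forall i, v i != 0) (eta delta : F) (heta : eta != 0) :
  forall c : 'rV[F]_(n + 2 + 1),
    inC k alpha v eta delta c <->
    exists c1 : 'rV[F]_(n + 2), inC1 k alpha v eta c1 /\
      c = extend (tvec k alpha v eta delta) c1.
Proof.
have [k' hk] : exists k', k = k'.+3 by exists (k - 3)%N; lia.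
subst k.
have key (f : {poly F}) : (size f <= k'.+3)%N -> encC k'.+3 alpha v eta delta f =
    extend (tvec k'.+3 alpha v eta delta) (encC1 k'.+3 alpha v eta f).
  move=> hf; rewrite /encC /extend /encC1; congr row_mx; apply/rowP => j; rewrite !mxE.
  by rewrite (Kkey eta delta halpha hv hkn hf).
move=> c; split.
  move=> [f [hf ->]]; exists (encC1 k'.+3 alpha v eta f); split; first by exists f.
  exact: key.
move=> [c1 [[f [hf ->]] ->]]; exists f; split => //.
by rewrite key.
Qed.
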